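(* For a topological space $X$ the following are equivalent: (1) $X$ is strongly star Menger; (2) for every nonempty $A\subseteq X$ and every sequence $(\mathcal U_n:n\in\omega)$ of families of open subsets of $X$ with $\overline A\subseteq\bigcup\mathcal U_n$ for every $n$, there is a sequence $(F_n:n\in\omega)$ of finite subsets of $X$ with $A\subseteq\bigcup_{n\in\omega}st(F_n,\mathcal U_n)$.
   Context: For a family $\mathcal U$ of subsets of $X$ and $A\subseteq X$, $st(A,\mathcal U)=\bigcup\{U\in\mathcal U: U\cap A\neq\emptyset\}$. A space $X$ is strongly star Menger if for every sequence $(\mathcal U_n:n\in\omega)$ of open covers of $X$ there are finite sets $F_n\subseteq X$ ($n\in\omega$) with $X=\bigcup_{n\in\omega}st(F_n,\mathcal U_n)$. *)

(* Defs.v *)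
From HB Require Import structures.
From mathcomp Require Import all_boot all_order.
From mathcomp Require Import all_classical topology.
Set Implicit Arguments. Unset Strict Implicit. Unset Printing Implicit Defensive.
Local Open Scope classical_set_scope.

Definition star {T : Type} (A : set T) (U : set (set T)) : set T :=
  [set x | exists2 V, U V & (V `&` A !=set0) /\ V x].

Definition open_cover {T : topologicalType} (U : set (set T)) : Prop :=
  (forall V, U V -> open V) /\ [set: T] `<=` \bigcup_(V in U) V.

Definition strongly_star_Menger (T : topologicalType) : Prop :=
  forall Us : nat -> set (set T), (forall n, open_cover (Us n)) ->
  exists F : nat -> set T, (forall n, finite_set (F n)) /\
    [set: T] `<=` \bigcup_n star (F n) (Us n).

(* Main.v *)
Require Import Defs.
From HB Require Import structures.
From mathcomp Require Import all_boot all_order.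
From mathcomp Require Import all_classical topology.
Local Open Scope classical_set_scope.

Theorem proposition2p1 (T : topologicalType) :
  strongly_star_Menger T <->
  (forall (A : set T), A !=set0 ->
   forall Us : nat -> set (set T),
     (forall n V, Us n V -> open V) ->
     (forall n, closure A `<=` \bigcup_(V in Us n) V) ->
     exists F : nat -> set T, (forall n, finite_set (F n)) /\
       A `<=` \bigcup_n star (F n) (Us n)).
Proof.
split.
- move=> H A _ Us Uo Ucov.
  have oc : forall n, open_cover (Us n `|` [set ~` closure A]).
    move=> n; split.
    + move=> V [h|e]; first exact: Uo h.
      have -> : V = ~` closure A by exact: e.
      apply: closed_openC; exact: closed_closure.
    + move=> x _; have [cx|ncx] := pselect (closure A x).
      * have [V UV Vx] := Ucov n x cx; exists V; [by left | exact: Vx].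
      * exists (~` closure A); [by right | exact: ncx].
  have [F [Ffin HF]] := H _ oc.
  exists F; split; first exact: Ffin.
  move=> a Aa.
  have [n _ [V [HV|HV] [Vm Va]]] := HF a I.
  * exists n; first by []. exists V; [exact: HV | split; [exact: Vm | exact: Va]].
  * exfalso; have E : V = ~` closure A by exact: HV.
    rewrite E in Va; apply: Va; exact: subset_closure.
- move=> H Us Ucov.
  have [x0|T0] := pselect (exists x : T, True).
  + have [F [Ffin HF]] := H setT (ex_intro _ (projT1 (cid x0)) I) Us
      (fun n => proj1 (Ucov n)) (fun n x _ => proj2 (Ucov n) x I).
    exists F; split; [exact: Ffin | exact: HF].
  + exists (fun _ => set0); split; first by move=> n; exact: finite_set0.
    move=> x _; exfalso; apply: T0; by exists x.
Qed.
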